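(* Let $d\geq 2$ and $m\geq 1$ be integers. Let $\{e^d_k\}$ and $\{e^{d+m}_k\}$ be the standard bases of $\mathbb{C}^d$ and $\mathbb{C}^{d+m}$, and let $|J\rangle=\sum_{k=1}^d e^d_k$. Define $d\times(d+m)$ matrices $$V_i=\sum_{k=1}^{d}|e^d_k\rangle\langle e^{d+m}_{\mathrm{mod}(k+i-2,\,d+1)+1}|\quad (i=1,\dots,d+1),\qquad V_i=|J\rangle\langle e^{d+m}_i|\quad (i=d+2,\dots,d+m),$$ where $\mathrm{mod}(a,n)\in\{0,\dots,n-1\}$ is the remainder of $a$ modulo $n$, and let $\Phi:M_d\to M_{d+m}$ be $\Phi(X)=\frac{1}{d(d+m)}\sum_{i=1}^{d+m}V_i^\dagger XV_i$. Let $\rho=\sum_{r,s=1}^{d}E_{rs}\otimes\Phi(E_{rs})\in M_d\otimes M_{d+m}$ be the Choi state of $\Phi$. Then $\rho$ has positive partial transpose, i.e. $(T\otimes\mathrm{id})(\rho)\geq 0$, where $T$ is the transpose on $M_d$.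
   Context: $M_n$ denotes the complex $n\times n$ matrices and $E_{rs}$ the matrix units of $M_d$. *)

(* Defs.v *)
From HB Require Import structures.
From mathcomp Require Import all_boot all_order all_algebra all_field.
From mathcomp Require Import mxtens.
Set Implicit Arguments. Unset Strict Implicit. Unset Printing Implicit Defensive.
Import Order.TTheory GRing.Theory Num.Theory.
Local Open Scope ring_scope.

Definition adjmx {m n : nat} (A : 'M[algC]_(m, n)) : 'M[algC]_(n, m) :=
  (map_mx Num.conj A)^T.

Definition psdmx {n : nat} (A : 'M[algC]_n) : Prop :=
  adjmx A = A /\ forall v : 'cV[algC]_n, 0 <= (adjmx v *m A *m v) 0 0.

(* partial transpose T (x) id on M_p (x) M_q, with the Kronecker index
   convention of mxtens ((a,b) |-> a*q + b). *)
Definition ptrans1 {p q : nat} (A : 'M[algC]_(p * q)) : 'M[algC]_(p * q) :=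
  \matrix_(i, j)
    A (mxtens_index ((mxtens_unindex j).1, (mxtens_unindex i).2))
      (mxtens_index ((mxtens_unindex i).1, (mxtens_unindex j).2)).

(* The Kraus-like operators V_i (0-based indices i < d+m, rows k < d,
   columns c < d+m):
   - i <= d   (paper's i = 1..d+1): V_i = sum_k |e_k><e_{(k+i) mod (d+1)}|
   - i >  d   (paper's i = d+2..d+m): V_i = |J><e_i|. *)
Definition Vop (d m : nat) (i : 'I_(d + m)) : 'M[algC]_(d, d + m) :=
  \matrix_(k < d, c < d + m)
    (if (i <= d)%N then ((c : nat) == (k + i) %% d.+1)%N%:R
     else ((c : nat) == i)%N%:R).

Arguments Vop : clear implicits.

Definition Phi (d m : nat) (X : 'M[algC]_d) : 'M[algC]_(d + m) :=
  (d * (d + m))%N%:R^-1 *: \sum_(i < d + m) (adjmx (Vop d m i) *m X *m Vop d m i).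

Arguments Phi d m X : clear implicits.

Definition choi (d m : nat) : 'M[algC]_(d * (d + m)) :=
  \sum_(r < d) \sum_(s < d) (delta_mx r s *t Phi d m (delta_mx r s)).

(* Main.v *)
Require Import Defs.
From HB Require Import structures.
From mathcomp Require Import all_boot all_order all_algebra all_field.
From mathcomp Require Import mxtens zify.
Import Order.TTheory GRing.Theory Num.Theory.
Local Open Scope ring_scope.

Lemma sum_ind n (P : 'I_n -> bool) (Q : bool) :
  (forall i j, P i -> P j -> i = j) -> (Q <-> exists i, P i) ->
  \sum_i (P i)%:R = Q%:R :> algC.
Proof.
move=> huniq eqv; case: Q eqv => eqv.
  have [i Pi] := (proj1 eqv isT).
  rewrite (bigD1 i) //= Pi big1 ?addr0 // => j nji.
  by case Pj: (P j) => //; rewrite (huniq _ _ Pj Pi) eqxx in nji.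
rewrite big1 // => j _; case Pj: (P j) => //.
by have: false by apply/eqv; exists j.
Qed.

Definition fidx (d r a : nat) : nat := if (a <= d)%N then ((r + a) %% d.+1)%N else a.

Definition Pidx (d r s a b i : nat) : bool :=
  if (i <= d)%N then (a == (s + i) %% d.+1)%N && (b == (r + i) %% d.+1)%N
  else (a == i) && (b == i).

Lemma Pidx_huniq d r s a b i j : (i <= d)%N || (j <= d)%N || true ->
  Pidx d r s a b i -> Pidx d r s a b j -> i = j.
Proof.
move=> _; rewrite /Pidx.
have ltM : forall x, (x %% d.+1 < d.+1)%N by move=> x; rewrite ltn_mod.
case: (leqP i d) => hi; case: (leqP j d) => hj.
- move=> /andP[/eqP ai _] /andP[/eqP aj _].
  have : (s + i == s + j %[mod d.+1])%N by rewrite -ai -aj.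
  by rewrite eqn_modDl !modn_small // => /eqP.
- move=> /andP[/eqP ai _] /andP[/eqP aj _].
  by move: (ltM (s + i)); rewrite -ai aj ltnS leqNgt hj.
- move=> /andP[/eqP ai _] /andP[/eqP aj _].
  by move: (ltM (s + j)); rewrite -aj ai ltnS leqNgt hi.
- by move=> /andP[/eqP -> _] /andP[/eqP -> _].
Qed.

Lemma Pidx_f d r s a b i : Pidx d r s a b i -> fidx d r a = fidx d s b.
Proof.
rewrite /Pidx /fidx; case: (leqP i d) => hi.
  move=> /andP[/eqP ai /eqP bi].
  have la : (a <= d)%N by rewrite ai -ltnS ltn_mod.
  have lb : (b <= d)%N by rewrite bi -ltnS ltn_mod.
  rewrite la lb ai bi !modnDmr.
  by rewrite addnA (addnC r s) addnA.
by move=> /andP[/eqP ha /eqP hb]; rewrite ha hb leqNgt hi.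
Qed.

Lemma f_Pidx d m r s a b : (r < d)%N -> (s < d)%N -> (a < d + m)%N -> (b < d + m)%N ->
  (1 <= m)%N ->
  fidx d r a = fidx d s b -> exists i, (i < d + m)%N /\ Pidx d r s a b i.
Proof.
move=> hr hs ha hb hm; rewrite /fidx /Pidx.
case: (leqP a d) => la; case: (leqP b d) => lb.
- move=> e.
  exists ((a + d.+1 - s) %% d.+1)%N; split.
    have h := ltn_pmod (a + d.+1 - s) (ltn0Sn d); lia.
  rewrite -ltnS ltn_mod /=.
  have sa : ((s + (a + d.+1 - s)) %% d.+1 = a)%N.
    rewrite addnBA; last by apply: leq_trans (ltnW hs) _; rewrite addnS ltnW // ltnS leq_addl.
    by rewrite addnC addnK modnDr modn_small.
  rewrite modnDmr sa eqxx /=.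
  have : (s + (r + (a + d.+1 - s)) == s + b %[mod d.+1])%N.
    by rewrite addnCA -modnDmr sa e.
  by rewrite eqn_modDl modnDmr => /eqP ->; rewrite modn_small.
- move=> e; have : ((r + a) %% d.+1 < d.+1)%N by rewrite ltn_mod.
  by rewrite e ltnNge lb.
- move=> e; have : ((s + b) %% d.+1 < d.+1)%N by rewrite ltn_mod.
  by rewrite -e ltnNge la.
- move=> ->; exists b; split => //.
  by rewrite leqNgt lb !eqxx.
Qed.
Lemma mul_delta_entry (p n q : nat) (A : 'M[algC]_(p, n)) (B : 'M[algC]_(n, q)) s r a b :
  (A *m delta_mx s r *m B) a b = A a s * B r b.
Proof.
rewrite mxE (bigD1 r) //= big1 ?addr0 => [|j nj]; rewrite mxE.
  rewrite (bigD1 s) //= big1 ?addr0 => [|k nk]; rewrite mxE ?eqxx ?mulr1 //.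
  by rewrite (negbTE nk) mulr0.
rewrite big1 ?mul0r // => k _; by rewrite mxE (negbTE nj) andbF mulr0.
Qed.

Lemma pt_entry d m (r s : 'I_d) (a b : 'I_(d+m)) :
 ptrans1 (choi d m) (mxtens_index (r,a)) (mxtens_index (s,b)) =
 (d*(d+m))%:R^-1 * \sum_(i < d + m) (Vop d m i s a * Vop d m i r b).
Proof.
rewrite /ptrans1 mxE !mxtens_indexK /= /choi summxE.
rewrite [LHS](bigD1 s) //= [X in _ + X]big1 ?addr0 => [|r' nr]; last first.
  rewrite summxE big1 // => s' _.
  by rewrite tensmxE mxE eq_sym (negbTE nr) mul0r.
rewrite summxE [LHS](bigD1 r) //= [X in _ + X]big1 ?addr0 => [|s' ns]; last first.
  by rewrite tensmxE mxE eq_sym (negbTE ns) andbF mul0r.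
rewrite tensmxE mxE !eqxx mul1r /Phi mxE summxE; congr (_ * _).
apply: eq_bigr => i _; rewrite mul_delta_entry /adjmx !mxE.
by case: ifP => _; rewrite conjC_nat.
Qed.
Lemma adjmxM (p q r : nat) (A : 'M[algC]_(p, q)) (B : 'M[algC]_(q, r)) :
  adjmx (A *m B) = adjmx B *m adjmx A.
Proof. by rewrite /adjmx (map_mxM Num.conj_op) trmx_mul. Qed.

Lemma adjmxK (p q : nat) (A : 'M[algC]_(p, q)) : adjmx (adjmx A) = A.
Proof. by apply/matrixP => i j; rewrite !mxE conjCK. Qed.

Lemma adjmxZ (p q : nat) c (A : 'M[algC]_(p, q)) : adjmx (c *: A) = c^* *: adjmx A.
Proof. by apply/matrixP => i j; rewrite !mxE rmorphM. Qed.

Lemma psd_gram (n k : nat) (B : 'M[algC]_(n, k)) (c : algC) :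
  0 <= c -> c^* = c -> psdmx (c *: (B *m adjmx B)).
Proof.
move=> c0 cc; split.
  by rewrite adjmxZ adjmxM adjmxK cc.
move=> v; rewrite -scalemxAr -scalemxAl mxE !mulmxA.
have -> : adjmx v *m B = adjmx (adjmx B *m v) by rewrite adjmxM adjmxK.
rewrite -mulmxA mxE.
apply: mulr_ge0 => //; apply: sumr_ge0 => t _.
by rewrite !mxE mulrC mul_conjC_ge0.
Qed.

Lemma fidx_lt d m r a : (r < d)%N -> (a < d + m)%N -> (1 <= m)%N -> (fidx d r a < d + m)%N.
Proof.
move=> hr ha hm; rewrite /fidx; case: ifP => // _.
have h := ltn_pmod (r + a) (ltn0Sn d); lia.
Qed.

Theorem mainTheorem5 (d m : nat) (hd : (2 <= d)%N) (hm : (1 <= m)%N) :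
  psdmx (ptrans1 (choi d m)).
Proof.
pose fx (x : 'I_(d * (d + m))) := fidx d (mxtens_unindex x).1 (mxtens_unindex x).2.
pose B : 'M[algC]_(d * (d + m), d + m) := \matrix_(x, t) (fx x == t)%:R.
have -> : ptrans1 (choi d m) = (d * (d + m))%:R^-1 *: (B *m adjmx B).
  apply/matrixP => x y.
  case: (mxtens_indexP x) => r a; case: (mxtens_indexP y) => s b.
  rewrite pt_entry [RHS]mxE; congr (_ * _).
  rewrite mxE.
  transitivity (\sum_(i < d + m) (Pidx d r s a b i)%:R : algC).
    apply: eq_bigr => i _; rewrite /Pidx !mxE.
    by case: ifP => _; rewrite -natrM mulnb.
  transitivity ((fidx d r a == fidx d s b)%:R : algC).
    apply: sum_ind.
      by move=> i j Pi Pj; apply: val_inj; exact: (Pidx_huniq _ _ _ _ _ _ _ (orbT _) Pi Pj).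
    split.
      move=> /eqP e.
      have [i [hi Pi]] := @f_Pidx d m r s a b (ltn_ord r) (ltn_ord s) (ltn_ord a) (ltn_ord b) hm e.
      by exists (Ordinal hi).
    by move=> [i Pi]; apply/eqP; exact: (Pidx_f _ _ _ _ _ _ Pi).
  symmetry.
  transitivity (\sum_(t < d + m) ((fx (mxtens_index (r, a)) == t) && (fx (mxtens_index (s, b)) == t))%:R : algC).
    apply: eq_bigr => t _; rewrite /adjmx !mxE conjC_nat.
    by rewrite -natrM mulnb.
  apply: sum_ind.
    by move=> i j /andP[/eqP ei _] /andP[/eqP ej _]; apply: val_inj; rewrite /= -ei -ej.
  rewrite /fx !mxtens_indexK /=; split.
    move=> /eqP e.
    exists (Ordinal (@fidx_lt d m r a (ltn_ord r) (ltn_ord a) hm)).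
    by rewrite /= e eqxx.
  by move=> [t /andP[/eqP -> /eqP ->]].
apply: psd_gram.
  by rewrite invr_ge0 ler0n.
by rewrite fmorphV rmorph_nat.
Qed.
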